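(* Let $\xi\in(0,1)$, let $\rho(x)=\sum_{j\ge2}\rho_jx^{j-1}$ be a degree distribution with average degree $a$ (i.e. $1/a=\int_0^1\rho(x)dx$) and maximal degree at most $k_ca$ for a constant $k_c$. Then for every $x\in(0,\xi]$, $$\frac{d^2}{dx^2}[\rho(1-x)]\le -\frac{k_ca}{1-\xi}\,\frac{d}{dx}[\rho(1-x)].$$
   Context: A degree distribution is a polynomial $\rho(x)=\sum_{j\ge2}\rho_jx^{j-1}$ with $\rho_j\ge0$ and $\sum_j\rho_j=1$; its maximal degree is the largest $j$ with $\rho_j\ne0$. *)

(* Defs.v *)
From Stdlib Require Import Reals.
From Coquelicot Require Import Coquelicot.
Open Scope R_scope.

Definition is_degree_distribution (c : nat -> R) (N : nat) : Prop :=
  (forall j, 0 <= c j) /\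
  c 0%nat = 0 /\ c 1%nat = 0 /\
  (forall j, (N < j)%nat -> c j = 0) /\
  sum_f_R0 c N = 1.

(* rho(x) = sum_{j>=2} rho_j x^(j-1)  (terms j = 0,1 vanish since c 0 = c 1 = 0) *)
Definition rho_fun (c : nat -> R) (N : nat) (x : R) : R :=
  sum_f_R0 (fun j => c j * x ^ (j - 1)) N.

Definition max_degree_le (c : nat -> R) (D : R) : Prop :=
  forall j, c j <> 0 -> INR j <= D.

(* Main.v *)
Require Import Defs.
From Stdlib Require Import Reals Lra Lia.
From Coquelicot Require Import Coquelicot.
Open Scope R_scope.

Lemma der_sum (d : nat -> R) (e : nat -> nat) (n : nat) (y : R) :
  is_derive (fun y => sum_f_R0 (fun j => d j * (1 - y) ^ (e j)) n) y
    (sum_f_R0 (fun j => - (d j * INR (e j)) * (1 - y) ^ (Nat.pred (e j))) n).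
Proof.
  induction n as [|n IH]; simpl.
  - assert (H1 : is_derive (fun y : R => 1 - y) y (-1)).
    { auto_derive; auto; ring. }
    pose proof (is_derive_scal _ _ (d 0%nat) _ (is_derive_pow _ (e 0%nat) _ _ H1)) as H.
    { replace (- (d 0%nat * INR (e 0%nat)) * (1 - y) ^ Nat.pred (e 0%nat))
        with (d 0%nat * (INR (e 0%nat) * -1 * (1 - y) ^ Nat.pred (e 0%nat))) by ring.
      exact H. }
  - assert (H1 : is_derive (fun y : R => 1 - y) y (-1)).
    { auto_derive; auto; ring. }
    pose proof (is_derive_scal _ _ (d (S n)) _ (is_derive_pow _ (e (S n)) _ _ H1)) as H.
    pose proof (is_derive_plus _ _ _ _ _ IH H) as H2.
    replace (sum_f_R0 (fun j => - (d j * INR (e j)) * (1 - y) ^ Nat.pred (e j)) n +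
      - (d (S n) * INR (e (S n))) * (1 - y) ^ Nat.pred (e (S n)))
      with (plus (sum_f_R0 (fun j => - (d j * INR (e j)) * (1 - y) ^ Nat.pred (e j)) n)
        (d (S n) * (INR (e (S n)) * -1 * (1 - y) ^ Nat.pred (e (S n))))).
    2: { unfold plus; simpl; ring. }
    exact H2.
Qed.

Lemma sum_le_K (A B : nat -> R) (K : R) (n : nat) :
  (forall j, A j <= K * B j) -> sum_f_R0 A n <= K * sum_f_R0 B n.
Proof.
  intros H; induction n as [|n IH]; simpl.
  - apply H.
  - rewrite Rmult_plus_distr_l. apply Rplus_le_compat; auto.
Qed.

Theorem proposition2 (xi : R) (c : nat -> R) (N : nat) (a kc : R) :
  0 < xi < 1 ->
  is_degree_distribution c N ->
  / a = RInt (rho_fun c N) 0 1 ->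
  max_degree_le c (kc * a) ->
  forall x : R, 0 < x <= xi ->
    Derive (Derive (fun y => rho_fun c N (1 - y))) x
      <= - (kc * a / (1 - xi)) * Derive (fun y => rho_fun c N (1 - y)) x.
Proof.
  intros Hxi [Hpos [H0 [H1' _]]] _ Hmax x Hx.
  set (d2 := fun j => - (c j * INR (j - 1))).
  set (e2 := fun j => Nat.pred (j - 1)).
  assert (D1 : forall y, Derive (fun y => rho_fun c N (1 - y)) y =
     sum_f_R0 (fun j => d2 j * (1 - y) ^ (e2 j)) N).
  { intros y. apply is_derive_unique. unfold rho_fun.
    pose proof (der_sum c (fun j => (j - 1)%nat) N y) as H. simpl in H. eapply is_derive_ext; [|exact H]. intros t.
    apply sum_eq; intros; reflexivity. }
  rewrite (Derive_ext _ _ x D1), D1.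
  rewrite (is_derive_unique (fun y : R => sum_f_R0 (fun j : nat => d2 j * (1 - y) ^ e2 j) N) _ _ (der_sum d2 e2 N x)).
  set (K := kc * a / (1 - xi)).
  apply sum_le_K. intros j. unfold d2, e2.
  destruct (Req_dec (c j) 0) as [Hc|Hc].
  { rewrite Hc. lra. }
  pose proof (Hmax j Hc) as Hj. pose proof (Hpos j) as Hcj.
  assert (Hcp : 0 < c j) by lra.
  assert (Ht : 1 - xi <= 1 - x) by lra.
  assert (Ht0 : 0 < 1 - xi) by lra.
  assert (HK : kc * a <= K * (1 - x)).
  { unfold K. unfold Rdiv. rewrite Rmult_assoc.
    assert (1 <= / (1 - xi) * (1 - x)).
    { apply (Rmult_le_reg_l (1 - xi)); auto.
      rewrite <- Rmult_assoc, Rinv_r by lra. lra. }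
    assert (0 <= kc * a) by (pose proof (pos_INR j); lra).
    nra. }
  destruct j as [|[|[|m]]].
  - rewrite H0 in Hc. lra.
  - rewrite H1' in Hc. lra.
  - simpl. assert (0 <= K).
    { assert (2 <= kc * a) by (simpl in Hj; lra).
      unfold K, Rdiv. pose proof (Rinv_0_lt_compat _ Ht0). nra. }
    nra.
  - replace (S (S (S m)) - 1)%nat with (S (S m)) by lia.
    simpl Nat.pred.
    replace (INR (S (S m))) with (INR m + 2) by (rewrite !S_INR; ring).
    replace (INR (S m)) with (INR m + 1) by (rewrite !S_INR; ring).
    simpl (_ ^ S _).
    pose proof (pos_INR m) as Hm.
    assert (Hpw : 0 <= (1 - x) ^ m) by (apply pow_le; lra).
    replace (INR (S (S (S m)))) with (INR m + 3) in Hj by (rewrite !S_INR; ring).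
    assert (HH : (INR m + 1) <= K * (1 - x)) by lra.
    assert (HH2 : c (S (S (S m))) * (INR m + 2) * (1 - x) ^ m * (INR m + 1) <=
           c (S (S (S m))) * (INR m + 2) * (1 - x) ^ m * (K * (1 - x))).
    { apply Rmult_le_compat_l; auto. apply Rmult_le_pos; [nra|auto]. }
    nra.
Qed.
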